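(* Let $w :: \bar v, \bar\sigma \Rightarrow \bar\rho, \bar\kappa$ be a raw match derivation. Then $\mathrm{bwd}_w : \mathrm{Sel}(\bar\rho)\times\mathrm{Sel}(\bar\kappa)\times\mathbb{A} \to \mathrm{Sel}(\bar v)\times\mathrm{Sel}(\bar\sigma)$ and $\mathrm{fwd}_w : \mathrm{Sel}(\bar v)\times\mathrm{Sel}(\bar\sigma)\to\mathrm{Sel}(\bar\rho)\times\mathrm{Sel}(\bar\kappa)\times\mathbb{A}$ form a Galois connection with $\mathrm{bwd}_w$ the lower adjoint: both are monotone, and for all $(\rho,\kappa,\alpha)$ and all $(v,\sigma)$ we have $\mathrm{fwd}_w(\mathrm{bwd}_w(\rho,\kappa,\alpha)) \ge (\rho,\kappa,\alpha)$ and $\mathrm{bwd}_w(\mathrm{fwd}_w(v,\sigma)) \le (v,\sigma)$.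
   Context: Fix a bounded lattice $(\mathbb{A},\le,\top,\bot,\sqcap,\sqcup)$ of ''selection states''. Raw values are $\bar v ::= \mathsf{true}\mid\mathsf{false}\mid n \mid [\,] \mid (\bar u : \bar v) \mid \langle x_1:\bar v_1,\dots,x_k:\bar v_k\rangle \mid$ closures. A selection of a raw value $\bar v$ is the same tree with an element of $\mathbb{A}$ attached to every Boolean, integer, nil, cons and record node (closures carry selections on their components), written $\mathsf{true}_\alpha$, $\mathsf{false}_\alpha$, $n_\alpha$, $[\,]_\alpha$, $(u :_\alpha v)$, $\langle x_1:v_1,\dots,x_k:v_k\rangle_\alpha$. $\mathrm{Sel}(\bar v)$ denotes the set of selections of shape $\bar v$, ordered pointwise; it is a bounded lattice. Likewise for every raw term, eliminator, continuation or environment $\bar X$, $\mathrm{Sel}(\bar X)$ is the pointwise-ordered lattice of its selections; $\bot$ also denotes the least selection of a given raw object. Environments are finite sequences $\rho = x_1:v_1,\dots,x_k:v_k$ with concatenation $\cdot$ and empty environment $\varepsilon$; selections of an environment are pointwise. Products of lattices are ordered componentwise. Eliminators: $\sigma ::= (x\mapsto\kappa) \mid \{\mathsf{true}\mapsto\kappa,\ \mathsf{false}\mapsto\kappa'\} \mid \{\langle x_1,\dots,x_k\rangle\mapsto\kappa\}\ (k\ge 0) \mid \{[\,]\mapsto\kappa,\ (:)\mapsto\sigma'\}$, where a continuation $\kappa$ is either a term or an eliminator. Eliminators carry no selection states of their own; a selection of an eliminator is a selection of each of its component continuations. Raw match derivations $w :: \bar v, \bar\sigma \Rightarrow \bar\rho,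 \bar\kappa$ are generated by: (var) $x :: \bar v, (x\mapsto\bar\kappa) \Rightarrow (x:\bar v), \bar\kappa$; (true) $\mathsf{true} :: \mathsf{true}, \{\mathsf{true}\mapsto\bar\kappa,\mathsf{false}\mapsto\bar\kappa'\} \Rightarrow \varepsilon, \bar\kappa$; (false) analogously yielding $\varepsilon,\bar\kappa'$; (nil) $[\,] :: [\,], \{[\,]\mapsto\bar\kappa,(:)\mapsto\bar\sigma\} \Rightarrow \varepsilon,\bar\kappa$; (cons) if $w_1 :: \bar v_1,\bar\sigma_1 \Rightarrow \bar\rho_1,\bar\tau$ and $w_2 :: \bar v_2,\bar\tau \Rightarrow \bar\rho_2,\bar\kappa$ then $(w_1:w_2) :: (\bar v_1:\bar v_2), \{[\,]\mapsto\bar\kappa_0,(:)\mapsto\bar\sigma_1\} \Rightarrow \bar\rho_1\cdot\bar\rho_2,\bar\kappa$; (unit) $\langle\rangle :: \langle\rangle, \{\langle\rangle\mapsto\bar\kappa\}\Rightarrow\varepsilon,\bar\kappa$; (record, $k\ge1$) if $w' :: \langle x_1:\bar v_1,\dots,x_{k-1}:\bar v_{k-1}\rangle, \{\langle x_1,\dots,x_{k-1}\rangle\mapsto\bar\kappa_0\} \Rightarrow \bar\rho,\bar\sigma'$ with $w' = \langle x_1:w_1,\dots,x_{k-1}:w_{k-1}\rangle$ and $w_k :: \bar v_k,\bar\sigma'\Rightarrow\bar\rho',\bar\kappa$, then $\langle x_1:w_1,\dots,x_k:w_k\rangle :: \langle x_1:\bar v_1,\dots,x_k:\bar v_k\rangle,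 \{\langle x_1,\dots,x_k\rangle\mapsto\bar\kappa_0\} \Rightarrow \bar\rho\cdot\bar\rho',\bar\kappa$. Forward match $\mathrm{fwd}_w$ is defined by recursion on $w$: (var) $\mathrm{fwd}(v, x\mapsto\kappa) = (x:v,\kappa,\top)$; (true) $\mathrm{fwd}(\mathsf{true}_\alpha,\{\mathsf{true}\mapsto\kappa,\mathsf{false}\mapsto\kappa'\}) = (\varepsilon,\kappa,\alpha)$; (false) $\mathrm{fwd}(\mathsf{false}_\alpha,\{\mathsf{true}\mapsto\kappa,\mathsf{false}\mapsto\kappa'\})=(\varepsilon,\kappa',\alpha)$; (nil) $\mathrm{fwd}([\,]_\alpha,\{[\,]\mapsto\kappa,(:)\mapsto\sigma'\})=(\varepsilon,\kappa,\alpha)$; (cons) if $\mathrm{fwd}_{w_1}(v_1,\sigma_1)=(\rho_1,\tau,\beta)$ and $\mathrm{fwd}_{w_2}(v_2,\tau)=(\rho_2,\kappa,\beta')$ then $\mathrm{fwd}_{w_1:w_2}((v_1:_\alpha v_2),\{[\,]\mapsto\kappa_0,(:)\mapsto\sigma_1\}) = (\rho_1\cdot\rho_2,\kappa,\alpha\sqcap\beta\sqcap\beta')$; (unit) $\mathrm{fwd}(\langle\rangle_\alpha,\{\langle\rangle\mapsto\kappa\}) = (\varepsilon,\kappa,\alpha)$; (record, $k\ge1$) if $\mathrm{fwd}_{w'}(\langle x_1:v_1,\dots,x_{k-1}:v_{k-1}\rangle_\top, \{\langle x_1,\dots,x_{k-1}\rangle\mapsto\kappa_0\}) = (\rho,\sigma',\beta)$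 and $\mathrm{fwd}_{w_k}(v_k,\sigma') = (\rho',\kappa,\beta')$ then $\mathrm{fwd}(\langle x_1:v_1,\dots,x_k:v_k\rangle_\alpha, \{\langle x_1,\dots,x_k\rangle\mapsto\kappa_0\}) = (\rho\cdot\rho',\kappa,\alpha\sqcap\beta\sqcap\beta')$. Backward match $\mathrm{bwd}_w$ is defined by recursion on $w$ (below $\bot$ is the least selection of the raw continuation of the untaken branch in $\bar\sigma$, and an environment selection in $\mathrm{Sel}(\bar\rho_1\cdot\bar\rho_2)$ is split uniquely as $\rho_1\cdot\rho_2$ with $\rho_i\in\mathrm{Sel}(\bar\rho_i)$): (var) $\mathrm{bwd}(x:v,\kappa,\alpha) = (v, x\mapsto\kappa)$; (true) $\mathrm{bwd}(\varepsilon,\kappa,\alpha) = (\mathsf{true}_\alpha,\{\mathsf{true}\mapsto\kappa,\mathsf{false}\mapsto\bot\})$; (false) $\mathrm{bwd}(\varepsilon,\kappa,\alpha) = (\mathsf{false}_\alpha,\{\mathsf{true}\mapsto\bot,\mathsf{false}\mapsto\kappa\})$; (nil) $\mathrm{bwd}(\varepsilon,\kappa,\alpha) = ([\,]_\alpha,\{[\,]\mapsto\kappa,(:)\mapsto\bot\})$; (cons) if $\mathrm{bwd}_{w_2}(\rho_2,\kappa,\alpha) = (v_2,\tau)$ and $\mathrm{bwd}_{w_1}(\rho_1,\tau,\alpha) = (v_1,\sigma_1)$ then $\mathrm{bwd}_{w_1:w_2}(\rho_1\cdot\rho_2,\kappa,\alpha) = ((v_1:_\alpha v_2),\{[\,]\mapsto\bot,(:)\mapsto\sigma_1\})$;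 (unit) $\mathrm{bwd}(\varepsilon,\kappa,\alpha) = (\langle\rangle_\alpha,\{\langle\rangle\mapsto\kappa\})$; (record, $k\ge 1$) if $\mathrm{bwd}_{w_k}(\rho_2,\kappa,\alpha) = (v_k,\sigma')$ and $\mathrm{bwd}_{w'}(\rho_1,\sigma',\alpha) = (\langle x_1:v_1,\dots,x_{k-1}:v_{k-1}\rangle_\beta, \{\langle x_1,\dots,x_{k-1}\rangle\mapsto\kappa_0\})$ then $\mathrm{bwd}(\rho_1\cdot\rho_2,\kappa,\alpha) = (\langle x_1:v_1,\dots,x_k:v_k\rangle_\alpha, \{\langle x_1,\dots,x_k\rangle\mapsto\kappa_0\})$. *)

(* Defs.v *)
From HB Require Import structures.
From mathcomp Require Import all_boot all_order ssralg ssrint.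
Set Implicit Arguments. Unset Strict Implicit. Unset Printing Implicit Defensive.
Import Order.TTheory.

Definition var := nat.

(* Syntax parametrised by the type [A] of selection states attached to nodes.
   Raw objects are those with [A := unit]; a selection of a raw object [X] is an
   [A]-annotated object whose erasure (map to [tt]) is [X]. *)
Inductive term (A : Type) :=
| TVar of var
| TInt of int & A
| TTrue of A
| TFalse of A
| TNil of A
| TCons of A & term A & term A
| TRec of A & seq (var * term A)
| TProj of term A & var
| TApp of term A & term A
| TLam of elim A
| TLet of term A & elim A
| TLetRec of seq (var * elim A) & term A
with elim (A : Type) :=
| EVar of var & cont A
| EBool of cont A & cont A             (* {true |-> kappa, false |-> kappa'} *)
| ERec of seq var & cont A
| EList of cont A & elim A             (* {[] |-> kappa, (:) |-> sigma'} *)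
with cont (A : Type) :=
| CTerm of term A
| CElim of elim A.

Inductive value (A : Type) :=
| VTrue of A
| VFalse of A
| VInt of int & A
| VNil of A
| VCons of A & value A & value A
| VRec of A & seq (var * value A)
| VClos of seq (var * value A) & seq (var * elim A) & elim A.

Arguments TVar {A}. Arguments TInt {A}. Arguments TTrue {A}. Arguments TFalse {A}.
Arguments TNil {A}. Arguments TCons {A}. Arguments TRec {A}. Arguments TProj {A}.
Arguments TApp {A}. Arguments TLam {A}. Arguments TLet {A}. Arguments TLetRec {A}.
Arguments EVar {A}. Arguments EBool {A}. Arguments ERec {A}. Arguments EList {A}.
Arguments CTerm {A}. Arguments CElim {A}.
Arguments VTrue {A}. Arguments VFalse {A}. Arguments VInt {A}. Arguments VNil {A}.
Arguments VCons {A}. Arguments VRec {A}. Arguments VClos {A}.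

Definition env (A : Type) := seq (var * value A).

Definition map_fields {T U : Type} (f : T -> U) (l : seq (var * T)) : seq (var * U) :=
  map (fun p => (p.1, f p.2)) l.

Fixpoint map_term {A B : Type} (f : A -> B) (t : term A) {struct t} : term B :=
  match t with
  | TVar x => TVar x
  | TInt n a => TInt n (f a)
  | TTrue a => TTrue (f a)
  | TFalse a => TFalse (f a)
  | TNil a => TNil (f a)
  | TCons a e1 e2 => TCons (f a) (map_term f e1) (map_term f e2)
  | TRec a fs => TRec (f a) (map_fields (map_term f) fs)
  | TProj e x => TProj (map_term f e) x
  | TApp e1 e2 => TApp (map_term f e1) (map_term f e2)
  | TLam s => TLam (map_elim f s)
  | TLet e s => TLet (map_term f e) (map_elim f s)
  | TLetRec h e => TLetRec (map_fields (map_elim f) h) (map_term f e)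
  end
with map_elim {A B : Type} (f : A -> B) (s : elim A) {struct s} : elim B :=
  match s with
  | EVar x k => EVar x (map_cont f k)
  | EBool k k' => EBool (map_cont f k) (map_cont f k')
  | ERec xs k => ERec xs (map_cont f k)
  | EList k s' => EList (map_cont f k) (map_elim f s')
  end
with map_cont {A B : Type} (f : A -> B) (k : cont A) {struct k} : cont B :=
  match k with
  | CTerm e => CTerm (map_term f e)
  | CElim s => CElim (map_elim f s)
  end.

Fixpoint map_val {A B : Type} (f : A -> B) (v : value A) {struct v} : value B :=
  match v with
  | VTrue a => VTrue (f a)
  | VFalse a => VFalse (f a)
  | VInt n a => VInt n (f a)
  | VNil a => VNil (f a)
  | VCons a v1 v2 => VCons (f a) (map_val f v1) (map_val f v2)
  | VRec a fs => VRec (f a) (map_fields (map_val f) fs)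
  | VClos r h s => VClos (map_fields (map_val f) r) (map_fields (map_elim f) h) (map_elim f s)
  end.

Definition map_env {A B : Type} (f : A -> B) (r : env A) : env B :=
  map_fields (map_val f) r.

Definition rel_fields {T U : Type} (R : T -> U -> Prop) :=
  fix go (l : seq (var * T)) (l' : seq (var * U)) {struct l} : Prop :=
    match l, l' with
    | [::], [::] => True
    | (x, a) :: l1, (y, b) :: l1' => x = y /\ R a b /\ go l1 l1'
    | _, _ => False
    end.

Fixpoint rel_term {A : Type} (R : A -> A -> Prop) (t t' : term A) {struct t} : Prop :=
  match t, t' with
  | TVar x, TVar y => x = y
  | TInt n a, TInt m b => n = m /\ R a b
  | TTrue a, TTrue b => R a b
  | TFalse a, TFalse b => R a b
  | TNil a, TNil b => R a b
  | TCons a e1 e2, TCons b e1' e2' => R a b /\ rel_term R e1 e1' /\ rel_term R e2 e2'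
  | TRec a fs, TRec b gs => R a b /\ rel_fields (rel_term R) fs gs
  | TProj e x, TProj e' y => rel_term R e e' /\ x = y
  | TApp e1 e2, TApp e1' e2' => rel_term R e1 e1' /\ rel_term R e2 e2'
  | TLam s, TLam s' => rel_elim R s s'
  | TLet e s, TLet e' s' => rel_term R e e' /\ rel_elim R s s'
  | TLetRec h e, TLetRec h' e' => rel_fields (rel_elim R) h h' /\ rel_term R e e'
  | _, _ => False
  end
with rel_elim {A : Type} (R : A -> A -> Prop) (s s' : elim A) {struct s} : Prop :=
  match s, s' with
  | EVar x k, EVar y k' => x = y /\ rel_cont R k k'
  | EBool k1 k2, EBool k1' k2' => rel_cont R k1 k1' /\ rel_cont R k2 k2'
  | ERec xs k, ERec ys k' => xs = ys /\ rel_cont R k k'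
  | EList k s1, EList k' s1' => rel_cont R k k' /\ rel_elim R s1 s1'
  | _, _ => False
  end
with rel_cont {A : Type} (R : A -> A -> Prop) (k k' : cont A) {struct k} : Prop :=
  match k, k' with
  | CTerm e, CTerm e' => rel_term R e e'
  | CElim s, CElim s' => rel_elim R s s'
  | _, _ => False
  end.

Fixpoint rel_val {A : Type} (R : A -> A -> Prop) (v v' : value A) {struct v} : Prop :=
  match v, v' with
  | VTrue a, VTrue b => R a b
  | VFalse a, VFalse b => R a b
  | VInt n a, VInt m b => n = m /\ R a b
  | VNil a, VNil b => R a b
  | VCons a v1 v2, VCons b v1' v2' => R a b /\ rel_val R v1 v1' /\ rel_val R v2 v2'
  | VRec a fs, VRec b gs => R a b /\ rel_fields (rel_val R) fs gs
  | VClos r h s, VClos r' h' s' =>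
      rel_fields (rel_val R) r r' /\ rel_fields (rel_elim R) h h' /\ rel_elim R s s'
  | _, _ => False
  end.

Definition rel_env {A : Type} (R : A -> A -> Prop) (r r' : env A) : Prop :=
  rel_fields (rel_val R) r r'.

Inductive mderiv : value unit -> elim unit -> env unit -> cont unit -> Type :=
| MVar (x : var) (v : value unit) (k : cont unit) :
    mderiv v (EVar x k) [:: (x, v)] k
| MTrue (k k' : cont unit) : mderiv (VTrue tt) (EBool k k') [::] k
| MFalse (k k' : cont unit) : mderiv (VFalse tt) (EBool k k') [::] k'
| MNil (k : cont unit) (s : elim unit) : mderiv (VNil tt) (EList k s) [::] k
| MCons (v1 v2 : value unit) (k0 : cont unit) (s1 : elim unit) (r1 : env unit)
        (t : elim unit) (r2 : env unit) (k : cont unit) :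
    mderiv v1 s1 r1 (CElim t) -> mderiv v2 t r2 k ->
    mderiv (VCons tt v1 v2) (EList k0 s1) (r1 ++ r2) k
| MUnit (k : cont unit) : mderiv (VRec tt [::]) (ERec [::] k) [::] k
| MRec (fs : seq (var * value unit)) (x : var) (v : value unit) (k0 : cont unit)
       (r : env unit) (s' : elim unit) (r' : env unit) (k : cont unit) :
    mderiv (VRec tt fs) (ERec (map fst fs) k0) r (CElim s') ->
    mderiv v s' r' k ->
    mderiv (VRec tt (rcons fs (x, v))) (ERec (rcons (map fst fs) x) k0) (r ++ r') k.

Section Slicing.
Local Open Scope order_scope.
Context {d : Order.disp_t} {A : tbLatticeType d}.

Definition erase_tt : A -> unit := fun _ => tt.
Definition sel_val (v : value A) (vb : value unit) : Prop := map_val erase_tt v = vb.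
Definition sel_elim (s : elim A) (sb : elim unit) : Prop := map_elim erase_tt s = sb.
Definition sel_cont (k : cont A) (kb : cont unit) : Prop := map_cont erase_tt k = kb.
Definition sel_env (r : env A) (rb : env unit) : Prop := map_env erase_tt r = rb.

Definition bot_fn : unit -> A := fun _ => \bot.
Definition bot_val (vb : value unit) : value A := map_val bot_fn vb.
Definition bot_elim (sb : elim unit) : elim A := map_elim bot_fn sb.
Definition bot_cont (kb : cont unit) : cont A := map_cont bot_fn kb.
Definition bot_env (rb : env unit) : env A := map_env bot_fn rb.

Definition leA (a b : A) : Prop := a <= b.
Definition le_val := rel_val leA.
Definition le_elim := rel_elim leA.
Definition le_cont := rel_cont leA.
Definition le_env := rel_env leA.
Definition le_out3 (x y : env A * cont A * A) : Prop :=
  [/\ le_env x.1.1 y.1.1, le_cont x.1.2 y.1.2 & x.2 <= y.2].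
Definition le_out2 (x y : value A * elim A) : Prop :=
  le_val x.1 y.1 /\ le_elim x.2 y.2.

(* Forward match; the default branches are unreachable on selections of the
   right shape. *)
Fixpoint fwd {vb sb rb kb} (w : mderiv vb sb rb kb) (v : value A) (s : elim A)
  {struct w} : env A * cont A * A :=
  let dflt := (bot_env rb, bot_cont kb, \bot) in
  match w with
  | MVar x _ _ => match s with EVar _ k => ([:: (x, v)], k, \top) | _ => dflt end
  | MTrue _ _ => match v, s with VTrue a, EBool k _ => ([::], k, a) | _, _ => dflt end
  | MFalse _ _ => match v, s with VFalse a, EBool _ k' => ([::], k', a) | _, _ => dflt end
  | MNil _ _ => match v, s with VNil a, EList k _ => ([::], k, a) | _, _ => dflt end
  | MCons _ _ _ _ _ _ _ _ w1 w2 =>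
      match v, s with
      | VCons a v1 v2, EList _ s1 =>
          let '(r1, t, b) := fwd w1 v1 s1 in
          match t with
          | CElim tau => let '(r2, k, b') := fwd w2 v2 tau in (r1 ++ r2, k, a `&` b `&` b')
          | _ => dflt
          end
      | _, _ => dflt
      end
  | MUnit _ => match v, s with VRec a _, ERec _ k => ([::], k, a) | _, _ => dflt end
  | MRec fs _ _ _ _ _ _ _ w' wk =>
      match v, s with
      | VRec a fsel, ERec _ k0 =>
          match rev fsel with
          | (_, vk) :: rinit =>
              let '(r, t, b) := fwd w' (VRec \top (rev rinit)) (ERec (map fst fs) k0) in
              match t with
              | CElim s' => let '(r', k, b') := fwd wk vk s' in (r ++ r', k, a `&` b `&` b')
              | _ => dflt
              end
          | [::] => dflt
          end
      | _, _ => dflt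
      end
  end.

(* Backward match; an environment selection of rho1 . rho2 is split according
   to the length of the raw rho1. *)
Fixpoint bwd {vb sb rb kb} (w : mderiv vb sb rb kb) (r : env A) (k : cont A) (a : A)
  {struct w} : value A * elim A :=
  let dflt := (bot_val vb, bot_elim sb) in
  match w with
  | MVar x _ _ => match r with [:: (_, v)] => (v, EVar x k) | _ => dflt end
  | MTrue _ k' => (VTrue a, EBool k (bot_cont k'))
  | MFalse k0 _ => (VFalse a, EBool (bot_cont k0) k)
  | MNil _ s => (VNil a, EList k (bot_elim s))
  | MCons _ _ k0 _ r1 _ _ _ w1 w2 =>
      let '(v2, tau) := bwd w2 (drop (size r1) r) k a in
      let '(v1, s1) := bwd w1 (take (size r1) r) (CElim tau) a in
      (VCons a v1 v2, EList (bot_cont k0) s1)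
  | MUnit _ => (VRec a [::], ERec [::] k)
  | MRec fs x _ _ r0 _ _ _ w' wk =>
      let '(vk, s') := bwd wk (drop (size r0) r) k a in
      match bwd w' (take (size r0) r) (CElim s') a with
      | (VRec _ fsel, ERec _ k0) =>
          (VRec a (rcons fsel (x, vk)), ERec (rcons (map fst fs) x) k0)
      | _ => dflt
      end
  end.

End Slicing.

(* Main.v *)
Require Import Defs.
From HB Require Import structures.
From mathcomp Require Import all_boot all_order ssralg ssrint.
Import Order.TTheory.
Local Open Scope order_scope.
From HB Require Import structures.
From mathcomp Require Import all_boot all_order ssralg ssrint.
Import Order.TTheory.
Local Open Scope order_scope.

Fixpoint allf {T : Type} (P : T -> Prop) (l : seq (var * T)) : Prop :=
  match l with [::] => True | p :: l' => P p.2 /\ allf P l' end.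

Section Ind.
Variable B : Type.
Variables (P : term B -> Prop) (Q : elim B -> Prop) (C : cont B -> Prop).
Hypothesis hVar : forall x, P (TVar x).
Hypothesis hInt : forall n a, P (TInt n a).
Hypothesis hTrue : forall a, P (TTrue a).
Hypothesis hFalse : forall a, P (TFalse a).
Hypothesis hNil : forall a, P (TNil a).
Hypothesis hCons : forall a e1 e2, P e1 -> P e2 -> P (TCons a e1 e2).
Hypothesis hRec : forall a fs, allf P fs -> P (TRec a fs).
Hypothesis hProj : forall e x, P e -> P (TProj e x).
Hypothesis hApp : forall e1 e2, P e1 -> P e2 -> P (TApp e1 e2).
Hypothesis hLam : forall s, Q s -> P (TLam s).
Hypothesis hLet : forall e s, P e -> Q s -> P (TLet e s).
Hypothesis hLetRec : forall h e, allf Q h -> P e -> P (TLetRec h e).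
Hypothesis hEVar : forall x k, C k -> Q (EVar x k).
Hypothesis hEBool : forall k k', C k -> C k' -> Q (EBool k k').
Hypothesis hERec : forall xs k, C k -> Q (ERec xs k).
Hypothesis hEList : forall k s, C k -> Q s -> Q (EList k s).
Hypothesis hCTerm : forall e, P e -> C (CTerm e).
Hypothesis hCElim : forall s, Q s -> C (CElim s).

Fixpoint tind (t : term B) : P t :=
  match t return P t with
  | TVar x => hVar x
  | TInt n a => hInt n a
  | TTrue a => hTrue a | TFalse a => hFalse a | TNil a => hNil a
  | TCons a e1 e2 => hCons a e1 e2 (tind e1) (tind e2)
  | TRec a fs => hRec a fs ((fix go (l : seq (var * term B)) : allf P l :=
        match l return allf P l with [::] => I | (x, e) :: l' => conj (tind e) (go l') end) fs)
  | TProj e x => hProj e x (tind e)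
  | TApp e1 e2 => hApp e1 e2 (tind e1) (tind e2)
  | TLam s => hLam s (eind s)
  | TLet e s => hLet e s (tind e) (eind s)
  | TLetRec h e => hLetRec h e ((fix go (l : seq (var * elim B)) : allf Q l :=
        match l return allf Q l with [::] => I | (x, e) :: l' => conj (eind e) (go l') end) h) (tind e)
  end
with eind (s : elim B) : Q s :=
  match s return Q s with
  | EVar x k => hEVar x k (cind k)
  | EBool k k' => hEBool k k' (cind k) (cind k')
  | ERec xs k => hERec xs k (cind k)
  | EList k s' => hEList k s' (cind k) (eind s')
  end
with cind (k : cont B) : C k :=
  match k return C k with
  | CTerm e => hCTerm e (tind e)
  | CElim s => hCElim s (eind s)
  end.

Lemma tec_ind : (forall t, P t) /\ (forall s, Q s) /\ (forall k, C k).
Proof. split; [exact tind | split; [exact eind | exact cind]]. Qed.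
End Ind.

Section VInd.
Variable B : Type.
Variable P : value B -> Prop.
Hypothesis hT : forall a, P (VTrue a).
Hypothesis hF : forall a, P (VFalse a).
Hypothesis hI : forall n a, P (VInt n a).
Hypothesis hN : forall a, P (VNil a).
Hypothesis hC : forall a v1 v2, P v1 -> P v2 -> P (VCons a v1 v2).
Hypothesis hR : forall a fs, allf P fs -> P (VRec a fs).
Hypothesis hCl : forall r h s, allf P r -> P (VClos r h s).
Fixpoint vind (v : value B) : P v :=
  match v return P v with
  | VTrue a => hT a | VFalse a => hF a | VInt n a => hI n a | VNil a => hN a
  | VCons a v1 v2 => hC a v1 v2 (vind v1) (vind v2)
  | VRec a fs => hR a fs ((fix go (l : seq (var * value B)) : allf P l :=
        match l return allf P l with [::] => I | (x, e) :: l' => conj (vind e) (go l') end) fs)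
  | VClos r h s => hCl r h s ((fix go (l : seq (var * value B)) : allf P l :=
        match l return allf P l with [::] => I | (x, e) :: l' => conj (vind e) (go l') end) r)
  end.
End VInd.
From HB Require Import structures.
From mathcomp Require Import all_boot all_order ssralg ssrint.
Import Order.TTheory.
Local Open Scope order_scope.

Lemma mf_comp {T U V : Type} (F : U -> V) (G : T -> U) (H : T -> V) l :
  allf (fun e => F (G e) = H e) l -> map_fields F (map_fields G l) = map_fields H l.
Proof. elim: l => [|[x e] l IH] //= [-> /IH]; rewrite /map_fields => ->. by []. Qed.

Lemma mf_id {T : Type} (F : T -> T) l :
  allf (fun e => F e = e) l -> map_fields F l = l.
Proof. elim: l => [|[x e] l IH] //= [-> /IH]; rewrite /map_fields => ->. by []. Qed.

Lemma map_comp_tec B C D (f : B -> C) (g : C -> D) :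
 (forall t, map_term g (map_term f t) = map_term (fun x => g (f x)) t) /\
 (forall s, map_elim g (map_elim f s) = map_elim (fun x => g (f x)) s) /\
 (forall k, map_cont g (map_cont f k) = map_cont (fun x => g (f x)) k).
Proof.
apply tec_ind; intros; simpl; f_equal; auto using mf_comp.
Qed.

Lemma map_id_tec B (f : B -> B) (hf : forall x, f x = x) :
 (forall t, map_term f t = t) /\ (forall s, map_elim f s = s) /\ (forall k, map_cont f k = k).
Proof.
apply tec_ind; intros; simpl; f_equal; auto using mf_id.
Qed.

Lemma map_comp_val B C D (f : B -> C) (g : C -> D) v :
  map_val g (map_val f v) = map_val (fun x => g (f x)) v.
Proof.
elim/vind: v => [a|a|n a|a|a v1 v2 H1 H2|a fs H|r h s H] /=; f_equal; auto using mf_comp.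
- apply: mf_comp; elim: h => [|[x e] h IH] //=; split => //; apply map_comp_tec.
- apply map_comp_tec.
Qed.

Lemma map_id_val B (f : B -> B) (hf : forall x, f x = x) v : map_val f v = v.
Proof.
elim/vind: v => [a|a|n a|a|a v1 v2 H1 H2|a fs H|r h s H] /=; f_equal; auto using mf_id.
- apply: mf_id; elim: h => [|[x e] h IH] //=; split => //; apply (@map_id_tec _ _ hf).
- apply (@map_id_tec _ _ hf).
Qed.
From HB Require Import structures.
From mathcomp Require Import all_boot all_order ssralg ssrint.
Import Order.TTheory.
Local Open Scope order_scope.

Lemma rf_refl {T : Type} (R : T -> T -> Prop) l :
  allf (fun e => R e e) l -> rel_fields R l l.
Proof. elim: l => [|[x e] l IH] //= [H /IH]; auto. Qed.

Lemma rf_trans {T : Type} (R : T -> T -> Prop) l :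
  allf (fun e => forall e2, R e e2 -> forall e3, R e2 e3 -> R e e3) l ->
  forall l2, rel_fields R l l2 -> forall l3, rel_fields R l2 l3 -> rel_fields R l l3.
Proof.
elim: l => [|[x e] l IH] /=.
- by move=> _ [|[y e2] l2].
- move=> [H /IH {}IH] [|[y e2] l2] //= [-> [H2 H3]] [|[z e3] l3] //= [-> [H4 H5]]; split=> //; eauto.
Qed.

Lemma rf_bot {T : Type} (R : T -> T -> Prop) F l :
  allf (fun e => R (F e) e) l -> rel_fields R (map_fields F l) l.
Proof. elim: l => [|[x e] l IH] //= [H /IH]; auto. Qed.

Section Ord.
Context {d : Order.disp_t} {A : tbLatticeType d}.

Lemma leA_refl (a : A) : leA a a. Proof. exact: lexx. Qed.
Lemma leA_trans (a b c : A) : leA a b -> leA b c -> leA a c.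
Proof. exact: le_trans. Qed.
Lemma leA_bot (a : A) : leA \bot a. Proof. exact: le0x. Qed.
Hint Resolve leA_refl leA_bot : core.

Lemma refl_tec :
 (forall t : term A, rel_term leA t t) /\ (forall s : elim A, rel_elim leA s s) /\
 (forall k : cont A, rel_cont leA k k).
Proof. apply tec_ind; intros; simpl; auto using rf_refl. Qed.

Lemma refl_val (v : value A) : rel_val leA v v.
Proof.
elim/vind: v => [a|a|n a|a|a v1 v2 H1 H2|a fs H|r h s H] /=; auto using rf_refl.
split; first exact: rf_refl. split; last apply refl_tec.
apply: rf_refl; elim: h => [|[x e] h IH] //=; split => //; apply refl_tec.
Qed.

Ltac trans_tac :=
  repeat match goal with H : _ /\ _ |- _ => destruct H end; subst;
  repeat split; eauto using leA_trans, rf_trans.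

Lemma trans_tec :
 (forall t1 : term A, forall t2, rel_term leA t1 t2 -> forall t3, rel_term leA t2 t3 -> rel_term leA t1 t3) /\
 (forall s1 : elim A, forall s2, rel_elim leA s1 s2 -> forall s3, rel_elim leA s2 s3 -> rel_elim leA s1 s3) /\
 (forall k1 : cont A, forall k2, rel_cont leA k1 k2 -> forall k3, rel_cont leA k2 k3 -> rel_cont leA k1 k3).
Proof.
apply tec_ind; intros;
(match goal with t2 : _ |- _ => idtac end);
match goal with
| H12 : rel_term _ _ ?t2, H23 : rel_term _ ?t2 ?t3 |- _ =>
    destruct t2; simpl in H12; try contradiction; destruct t3; simpl in H23; try contradiction; simpl
| H12 : rel_elim _ _ ?t2, H23 : rel_elim _ ?t2 ?t3 |- _ =>
    destruct t2; simpl in H12; try contradiction; destruct t3; simpl in H23; try contradiction; simpl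
| H12 : rel_cont _ _ ?t2, H23 : rel_cont _ ?t2 ?t3 |- _ =>
    destruct t2; simpl in H12; try contradiction; destruct t3; simpl in H23; try contradiction; simpl
end; trans_tac.
Qed.

Lemma trans_val (v1 : value A) : forall v2, rel_val leA v1 v2 -> forall v3, rel_val leA v2 v3 -> rel_val leA v1 v3.
Proof.
elim/vind: v1 => [a|a|n a|a|a v1 v2 H1 H2|a fs H|r h s H] t2 H12 t3 H23;
destruct t2; simpl in H12; try contradiction; destruct t3; simpl in H23; try contradiction; simpl;
trans_tac.
- apply: rf_trans; eauto. clear. elim: h => [|[x e] h IH] //=; split => //; apply trans_tec.
- apply: (proj1 (proj2 trans_tec)); eauto.
Qed.

Lemma bot_tec :
 (forall t : term A, rel_term leA (map_term (fun _ => \bot) t) t) /\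
 (forall s : elim A, rel_elim leA (map_elim (fun _ => \bot) s) s) /\
 (forall k : cont A, rel_cont leA (map_cont (fun _ => \bot) k) k).
Proof. apply tec_ind; intros; simpl; auto using rf_bot. Qed.

Lemma bot_val_le (v : value A) : rel_val leA (map_val (fun _ => \bot) v) v.
Proof.
elim/vind: v => [a|a|n a|a|a v1 v2 H1 H2|a fs H|r h s H] /=; auto using rf_bot.
split; first exact: rf_bot. split; last apply bot_tec.
apply: rf_bot; elim: h => [|[x e] h IH] //=; split => //; apply bot_tec.
Qed.
End Ord.
From HB Require Import structures.
From mathcomp Require Import all_boot all_order ssralg ssrint.
Import Order.TTheory.
Local Open Scope order_scope.

Section Main.
Context {d : Order.disp_t} {A : tbLatticeType d}.

Lemma unit_id (f : unit -> unit) x : f x = x. Proof. by case: x; case: (f tt). Qed.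

Lemma sel_bot_cont kb : sel_cont (bot_cont kb : cont A) kb.
Proof. rewrite /sel_cont /bot_cont (proj2 (proj2 (map_comp_tec _ _ _ _ _))). by apply (map_id_tec _ _ (unit_id _)). Qed.
Lemma sel_bot_elim sb : sel_elim (bot_elim sb : elim A) sb.
Proof. rewrite /sel_elim /bot_elim (proj1 (proj2 (map_comp_tec _ _ _ _ _))). by apply (map_id_tec _ _ (unit_id _)). Qed.
Lemma sel_bot_val vb : sel_val (bot_val vb : value A) vb.
Proof. rewrite /sel_val /bot_val map_comp_val. by apply (map_id_val _ _ (unit_id _)). Qed.
Lemma sel_bot_env rb : sel_env (bot_env rb : env A) rb.
Proof.
rewrite /sel_env /bot_env /map_env /map_fields; elim: rb => [|[x v] r IH] //=.
by rewrite IH map_comp_val (map_id_val _ _ (unit_id _)).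
Qed.

Lemma le_bot_cont (k : cont A) kb : sel_cont k kb -> le_cont (bot_cont kb) k.
Proof. move=> <-. rewrite /bot_cont (proj2 (proj2 (map_comp_tec _ _ _ _ _))). apply bot_tec. Qed.
Lemma le_bot_elim (k : elim A) kb : sel_elim k kb -> le_elim (bot_elim kb) k.
Proof. move=> <-. rewrite /bot_elim (proj1 (proj2 (map_comp_tec _ _ _ _ _))). apply bot_tec. Qed.

Lemma sel_env_split (r : env A) r1 r2 : sel_env r (r1 ++ r2) ->
  sel_env (take (size r1) r) r1 /\ sel_env (drop (size r1) r) r2.
Proof.
rewrite /sel_env /map_env /map_fields => H.
by rewrite map_take map_drop H take_size_cat // drop_size_cat.
Qed.

Lemma sel_env_cat (r1 r2 : env A) rb1 rb2 : sel_env r1 rb1 -> sel_env r2 rb2 -> sel_env (r1 ++ r2) (rb1 ++ rb2).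
Proof. rewrite /sel_env /map_env /map_fields => <- <-. by rewrite map_cat. Qed.

Lemma sel_env_size (r : env A) rb : sel_env r rb -> size r = size rb.
Proof. rewrite /sel_env /map_env /map_fields => <-. by rewrite size_map. Qed.

Lemma allf_all {T} (P : T -> Prop) l : (forall e, P e) -> allf P l.
Proof. move=> H; elim: l => [|[x e] l IH] //=. Qed.

Lemma le_env_refl (r : env A) : le_env r r.
Proof. apply: rf_refl; apply: allf_all; exact: refl_val. Qed.
Lemma le_cont_refl (k : cont A) : le_cont k k. Proof. apply refl_tec. Qed.
Lemma le_elim_refl (k : elim A) : le_elim k k. Proof. apply refl_tec. Qed.
Lemma le_val_refl (k : value A) : le_val k k. Proof. apply refl_val. Qed.
Lemma le_env_trans (r1 r2 r3 : env A) : le_env r1 r2 -> le_env r2 r3 -> le_env r1 r3.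
Proof. move=> H1 H2; apply: rf_trans H1 _ H2; apply: allf_all; exact: trans_val. Qed.
Lemma le_cont_trans (r1 r2 r3 : cont A) : le_cont r1 r2 -> le_cont r2 r3 -> le_cont r1 r3.
Proof. move=> H1 H2; apply: (proj2 (proj2 trans_tec)) H1 _ H2. Qed.
Lemma le_elim_trans (r1 r2 r3 : elim A) : le_elim r1 r2 -> le_elim r2 r3 -> le_elim r1 r3.
Proof. move=> H1 H2; apply: (proj1 (proj2 trans_tec)) H1 _ H2. Qed.
Lemma le_val_trans (r1 r2 r3 : value A) : le_val r1 r2 -> le_val r2 r3 -> le_val r1 r3.
Proof. move=> H1 H2; apply: trans_val H1 _ H2. Qed.

Lemma rf_cat {T} (R : T -> T -> Prop) l1 l1' l2 l2' :
  rel_fields R l1 l1' -> rel_fields R l2 l2' -> rel_fields R (l1 ++ l2) (l1' ++ l2').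
Proof.
elim: l1 l1' => [|[x e] l1 IH] [|[y e'] l1'] //= [-> [H1 H2]] H; split=> //; split=> //; exact: IH.
Qed.

Lemma rf_take {T} (R : T -> T -> Prop) n l l' :
  rel_fields R l l' -> rel_fields R (take n l) (take n l').
Proof.
elim: l l' n => [|[x e] l IH] [|[y e'] l'] [|n] //= [? [H1 H2]]; subst; split=> //; split=> //; exact: IH.
Qed.

Lemma rf_drop {T} (R : T -> T -> Prop) n l l' :
  rel_fields R l l' -> rel_fields R (drop n l) (drop n l').
Proof.
elim: l l' n => [|[x e] l IH] [|[y e'] l'] [|n] //= H.
by case: H => _ [_ /IH].
Qed.

Lemma rf_rcons {T} (R : T -> T -> Prop) l l' x e e' :
  rel_fields R l l' -> R e e' -> rel_fields R (rcons l (x, e)) (rcons l' (x, e')).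
Proof. move=> H1 H2; rewrite -!cats1; apply: rf_cat => //=. Qed.

Lemma rf_rcons_inv {T} (R : T -> T -> Prop) l l' x e x' e' :
  rel_fields R (rcons l (x, e)) (rcons l' (x', e')) -> [/\ rel_fields R l l', x = x' & R e e'].
Proof.
elim: l l' => [|[y f] l IH] [|[y' f'] l'] //=.
- by case=> -> [].
- by case: l' => [|[??]?] /= [_ [_ []]].
- by case: l {IH} => [|[??]?] /= [_ [_ []]].
- by case=> -> [H /IH [? ? ?]].
Qed.

Lemma le_cat (r1 r2 r1' r2' : env A) : le_env r1 r1' -> le_env r2 r2' -> le_env (r1 ++ r2) (r1' ++ r2').
Proof. exact: rf_cat. Qed.
End Main.
From HB Require Import structures.
From mathcomp Require Import all_boot all_order ssralg ssrint.
Import Order.TTheory.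
Local Open Scope order_scope.

Section Main2.
Context {d : Order.disp_t} {A : tbLatticeType d}.

Lemma sel_bwd vb sb rb kb (w : mderiv vb sb rb kb) :
  forall (r : env A) (k : cont A) (a : A), sel_env r rb -> sel_cont k kb ->
  sel_val (bwd w r k a).1 vb /\ sel_elim (bwd w r k a).2 sb.
Proof.
elim: w => {vb sb rb kb}.
- move=> x v k0 [|[y v'] [|p r]] k a //=; rewrite /sel_env /sel_cont /sel_val /sel_elim /map_env /map_fields //=.
  by case=> _ <- <-.
- move=> k0 k1 r k a _; rewrite /sel_cont /sel_val /sel_elim /= => ->.
  by have := sel_bot_cont k1; rewrite /sel_cont => ->.
- move=> k0 k1 r k a _; rewrite /sel_cont /sel_val /sel_elim /= => ->.
  by have := sel_bot_cont k0; rewrite /sel_cont => ->.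
- move=> k0 s r k a _; rewrite /sel_cont /sel_val /sel_elim /= => ->.
  by have := sel_bot_elim s; rewrite /sel_elim => ->.
- move=> v1 v2 k0 s1 r1 t r2 k1 w1 IH1 w2 IH2 r k a /sel_env_split [Hr1 Hr2] Hk /=.
  case E2: (bwd w2 _ _ _) => [v2' tau].
  have := IH2 _ _ a Hr2 Hk; rewrite E2 /= => -[Hv2 Ht].
  case E1: (bwd w1 _ _ _) => [v1' s1'].
  have := IH1 _ (CElim tau) a Hr1; rewrite E1 /= => -[|Hv1 Hs1].
    by rewrite /sel_cont /= Ht.
  move: Hv1 Hs1 Hv2; rewrite /sel_val /sel_elim /= => -> -> ->.
  by have := sel_bot_cont k0; rewrite /sel_cont => ->.
- move=> k0 r k a _; rewrite /sel_cont /sel_val /sel_elim /= => -> //.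
- move=> fs x v k0 r0 s' r' k1 w' IH' wk IHk r k a /sel_env_split [Hr1 Hr2] Hk /=.
  case Ek: (bwd wk _ _ _) => [vk s''].
  have := IHk _ _ a Hr2 Hk; rewrite Ek /= => -[Hvk Hs].
  case E1: (bwd w' _ _ _) => [vv ss].
  have := IH' _ (CElim s'') a Hr1; rewrite E1 /= => -[|].
    by rewrite /sel_cont /= Hs.
  rewrite /sel_val /sel_elim.
  case: vv E1 => [?|?|??|?|???|b fsel|???] E1 //= Hv; try discriminate.
  case: ss E1 => [??|??|ys k0'|??] E1 //= Hs'; try discriminate.
  move: Hv Hs' Hvk; case=> Hf; case=> _ Hk0 Hvk.
  by rewrite /map_fields map_rcons -/(map_fields _ _) Hf /= Hvk Hk0.
Qed.
End Main2.
From HB Require Import structures.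
From mathcomp Require Import all_boot all_order ssralg ssrint.
Import Order.TTheory.
Local Open Scope order_scope.

Section Main3.
Context {d : Order.disp_t} {A : tbLatticeType d}.

Lemma sel_fwd vb sb rb kb (w : mderiv vb sb rb kb) :
  forall (v : value A) (s : elim A), sel_val v vb -> sel_elim s sb ->
  sel_env (fwd w v s).1.1 rb /\ sel_cont (fwd w v s).1.2 kb.
Proof.
elim: w => {vb sb rb kb}.
- move=> x v k0 v' [y k|??|??|??]; try by move=> *; split; [apply: sel_bot_env|apply: sel_bot_cont].
  move=> /= Hv; rewrite /sel_elim /= => -[_ Hk].
  by rewrite /sel_env /map_env /map_fields /= Hv.
- move=> k0 k1 [a|?|??|?|???|??|???] [?|k k'|??|??]; try by move=> *; split; [apply: sel_bot_env|apply: sel_bot_cont].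
  by move=> /= _; rewrite /sel_elim /= => -[Hk _].
- move=> k0 k1 [?|a|??|?|???|??|???] [?|k k'|??|??]; try by move=> *; split; [apply: sel_bot_env|apply: sel_bot_cont].
  by move=> /= _; rewrite /sel_elim /= => -[_ Hk].
- move=> k0 s [?|?|??|a|???|??|???] [?|?|??|k s']; try by move=> *; split; [apply: sel_bot_env|apply: sel_bot_cont].
  by move=> /= _; rewrite /sel_elim /= => -[Hk _].
- move=> v1 v2 k0 s1 r1 t r2 k1 w1 IH1 w2 IH2 [?|?|??|?|a v1' v2'|??|???]; try by move=> *; split; [apply: sel_bot_env|apply: sel_bot_cont].
  move=> [??|??|??|k0' s1']; try by move=> *; split; [apply: sel_bot_env|apply: sel_bot_cont].
  rewrite /sel_val /sel_elim /= => -[H1 H2] [_ H3] /=.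
  case E1: (fwd w1 _ _) => [[r1' t'] b].
  have := IH1 _ _ H1 H3; rewrite E1 /= => -[Hr1 Ht].
  case: t' E1 Ht => [?|tau] E1 Ht; first by (move: Ht; rewrite /sel_cont).
  move: Ht; rewrite /sel_cont /= => -[Ht].
  case E2: (fwd w2 _ _) => [[r2' k2] b'].
  have := IH2 _ _ H2 Ht; rewrite E2 /= => -[Hr2 Hk2].
  split=> //; exact: sel_env_cat.
- move=> k0 [?|?|??|?|???|a fs|???] [?|?|??|k s']; try by move=> *; split; [apply: sel_bot_env|apply: sel_bot_cont].
  by move=> /= _; rewrite /sel_elim /= => -[_ Hk].
- move=> fs x v k0 r0 s' r' k1 w' IH' wk IHk [?|?|??|?|???|a fsel|???]; try by move=> *; split; [apply: sel_bot_env|apply: sel_bot_cont].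
  move=> [?|?|ys k0'|?]; try by move=> *; split; [apply: sel_bot_env|apply: sel_bot_cont].
  rewrite /sel_val /sel_elim /= => -[Hf] [Hys Hk0] /=.
  case/lastP: fsel Hf => [|fsel [x' vk]] Hf.
    by move/(congr1 size): Hf; rewrite /map_fields size_map size_rcons.
  move: Hf; rewrite /map_fields map_rcons => /rcons_inj [Hf _ Hvk].
  rewrite rev_rcons revK.
  case E1: (fwd w' _ _) => [[rr t'] b].
  have := IH' (VRec \top fsel) (ERec (map fst fs) k0'); rewrite E1 /= => -[||Hr1 Ht].
  - by rewrite /sel_val /= /map_fields Hf.
  - by rewrite /sel_elim /= Hk0.
  case: t' E1 Ht => [?|tau] E1 Ht; first by (move: Ht; rewrite /sel_cont).
  move: Ht; rewrite /sel_cont /= => -[Ht].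
  case E2: (fwd wk _ _) => [[r2' k2] b'].
  have := IHk _ _ Hvk Ht; rewrite E2 /= => -[Hr2 Hk2].
  split=> //; exact: sel_env_cat.
Qed.
End Main3.
From HB Require Import structures.
From mathcomp Require Import all_boot all_order ssralg ssrint.
Import Order.TTheory.
Local Open Scope order_scope.

Arguments sel_bwd {d A vb sb rb kb} w.
Arguments sel_fwd {d A vb sb rb kb} w.
Arguments rf_drop {T R} n {l l'}.
Arguments rf_take {T R} n {l l'}.
Section Main4.
Context {d : Order.disp_t} {A : tbLatticeType d}.

Lemma mono_bwd vb sb rb kb (w : mderiv vb sb rb kb) :
  forall (r r' : env A) (k k' : cont A) (a a' : A),
  sel_env r rb -> sel_cont k kb -> sel_env r' rb -> sel_cont k' kb ->
  le_out3 (r, k, a) (r', k', a') -> le_out2 (bwd w r k a) (bwd w r' k' a').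
Proof.
elim: w => {vb sb rb kb}.
- move=> x v k0 [|[y v1] [|??]] [|[y' v1'] [|??]] k k' a a'; rewrite /sel_env /map_env /map_fields /=;
    try (move=> *; discriminate).
  move=> _ _ _ _ [/= [_ [Hv _]] Hk _].
  by rewrite /le_out2 /le_elim /=.
- move=> k0 k1 r r' k k' a a' _ _ _ _ [_ Hk Ha]; rewrite /le_out2 /le_val /le_elim /=.
  by split=> //; split=> //; apply le_cont_refl.
- move=> k0 k1 r r' k k' a a' _ _ _ _ [_ Hk Ha]; rewrite /le_out2 /le_val /le_elim /=.
  by split=> //; split=> //; apply le_cont_refl.
- move=> k0 s r r' k k' a a' _ _ _ _ [_ Hk Ha]; rewrite /le_out2 /le_val /le_elim /=.
  by split=> //; split=> //; apply le_elim_refl.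
- move=> v1 v2 k0 s1 r1 t r2 k1 w1 IH1 w2 IH2 r r' k k' a a'
    /sel_env_split [Hr1 Hr2] Hk /sel_env_split [Hr1' Hr2'] Hk' [Hr Hkk Ha] /=.
  have S2 := sel_bwd w2 _ _ a Hr2 Hk. have S2' := sel_bwd w2 _ _ a' Hr2' Hk'.
  have := IH2 _ _ _ _ a a' Hr2 Hk Hr2' Hk' (And3 (rf_drop _ Hr) Hkk Ha).
  case: (bwd w2 _ _ _) S2 => [v2' tau]; case: (bwd w2 _ _ _) S2' => [v2'' tau'] /= [_ St'] [_ St] [Hv2 Ht].
  have S1 : sel_cont (CElim tau) (CElim t) by rewrite /sel_cont /= St.
  have S1' : sel_cont (CElim tau') (CElim t) by rewrite /sel_cont /= St'.
  have := IH1 _ _ _ _ a a' Hr1 S1 Hr1' S1' (And3 (rf_take _ Hr) Ht Ha).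
  case: (bwd w1 _ _ _) => [v1' s1']; case: (bwd w1 _ _ _) => [v1'' s1''] [/= Hv1 Hs1].
  rewrite /le_out2 /le_val /le_elim /=.
  by split=> //; split=> //; apply le_cont_refl.
- move=> k0 r r' k k' a a' _ _ _ _ [_ Hk Ha]; rewrite /le_out2 /le_val /le_elim /=.
  by split=> //; split=> //; apply le_elim_refl.
- move=> fs x v k0 r0 s' r1 k1 w' IH' wk IHk r r' k k' a a'
    /sel_env_split [Hr1 Hr2] Hk /sel_env_split [Hr1' Hr2'] Hk' [Hr Hkk Ha] /=.
  have S2 := sel_bwd wk _ _ a Hr2 Hk. have S2' := sel_bwd wk _ _ a' Hr2' Hk'.
  have := IHk _ _ _ _ a a' Hr2 Hk Hr2' Hk' (And3 (rf_drop _ Hr) Hkk Ha).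
  case: (bwd wk _ _ _) S2 => [vk tau]; case: (bwd wk _ _ _) S2' => [vk' tau'] /= [_ St'] [_ St] [Hv2 Ht].
  have S1 : sel_cont (CElim tau) (CElim s') by rewrite /sel_cont /= St.
  have S1' : sel_cont (CElim tau') (CElim s') by rewrite /sel_cont /= St'.
  have := IH' _ _ _ _ a a' Hr1 S1 Hr1' S1' (And3 (rf_take _ Hr) Ht Ha).
  have T1 := sel_bwd w' _ _ a Hr1 S1. have T1' := sel_bwd w' _ _ a' Hr1' S1'.
  case: (bwd w' _ _ _) T1 => [vv ss]; case: (bwd w' _ _ _) T1' => [vv' ss'].
  move=> [Hvv' Hss'] [Hvv Hss] Hle; simpl in Hvv, Hss, Hvv', Hss', Hle.
  case: vv Hvv Hle => [?|?|??|?|???|b fsel|???] Hvv Hle; try (move: Hvv; rewrite /sel_val /=; discriminate).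
  case: vv' Hvv' Hle => [?|?|??|?|???|b' fsel'|???] Hvv' Hle; try (move: Hvv'; rewrite /sel_val /=; discriminate).
  case: ss Hss Hle => [??|??|ys k2|??] Hss Hle; try (move: Hss; rewrite /sel_elim /=; discriminate).
  case: ss' Hss' Hle => [??|??|ys' k2'|??] Hss' Hle; try (move: Hss'; rewrite /sel_elim /=; discriminate).
  move: Hle; rewrite /le_out2 /le_val /le_elim /= => -[[_ Hf] [_ Hk2]].
  split; split=> //; exact: rf_rcons.
Qed.
End Main4.
From HB Require Import structures.
From mathcomp Require Import all_boot all_order ssralg ssrint.
Import Order.TTheory.
Local Open Scope order_scope.

Section Main5.
Context {d : Order.disp_t} {A : tbLatticeType d}.

Ltac badv H := try (move: H; rewrite /sel_val /sel_elim /sel_cont /=; discriminate).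

Lemma mono_fwd vb sb rb kb (w : mderiv vb sb rb kb) :
  forall (v v' : value A) (s s' : elim A),
  sel_val v vb -> sel_elim s sb -> sel_val v' vb -> sel_elim s' sb ->
  le_out2 (v, s) (v', s') -> le_out3 (fwd w v s) (fwd w v' s').
Proof.
elim: w => {vb sb rb kb}.
- move=> x v k0 u u' [y k|??|??|??] [y' k'|??|??|??] Hu Hs Hu' Hs'; badv Hs; badv Hs'.
  rewrite /le_out2 /le_out3 /le_val /le_elim /le_env /le_cont /= => -[Hv [_ Hk]].
  by split.
- move=> k0 k1 [a|?|??|?|???|??|???] [a'|?|??|?|???|??|???] [??|k kk|??|??] [??|k' kk'|??|??] Hu Hs Hu' Hs';
    badv Hu; badv Hu'; badv Hs; badv Hs'.
  rewrite /le_out2 /le_out3 /le_val /le_elim /le_env /le_cont /= => -[Ha [Hk _]].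
  by split.
- move=> k0 k1 [?|a|??|?|???|??|???] [?|a'|??|?|???|??|???] [??|k kk|??|??] [??|k' kk'|??|??] Hu Hs Hu' Hs';
    badv Hu; badv Hu'; badv Hs; badv Hs'.
  rewrite /le_out2 /le_out3 /le_val /le_elim /le_env /le_cont /= => -[Ha [_ Hk]].
  by split.
- move=> k0 s0 [?|?|??|a|???|??|???] [?|?|??|a'|???|??|???] [??|??|??|k kk] [??|??|??|k' kk'] Hu Hs Hu' Hs';
    badv Hu; badv Hu'; badv Hs; badv Hs'.
  rewrite /le_out2 /le_out3 /le_val /le_elim /le_env /le_cont /= => -[Ha [Hk _]].
  by split.
- move=> v1 v2 k0 s1 r1 t r2 k1 w1 IH1 w2 IH2
    [?|?|??|?|a u1 u2|??|???] [?|?|??|?|a' u1' u2'|??|???] [??|??|??|kk ss] [??|??|??|kk' ss'] Hu Hs Hu' Hs';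
    badv Hu; badv Hu'; badv Hs; badv Hs'.
  move: Hu Hs Hu' Hs'; rewrite /sel_val /sel_elim /= => -[H1 H2] [_ H3] [H1' H2'] [_ H3'].
  rewrite /le_out2 /le_val /le_elim /= => -[[Ha [Hu1 Hu2]] [_ Hss]] /=.
  have F1 := sel_fwd w1 _ _ H1 H3. have F1' := sel_fwd w1 _ _ H1' H3'.
  have L1 := IH1 _ _ _ _ H1 H3 H1' H3' (conj Hu1 Hss).
  move: F1 F1' L1.
  case: (fwd w1 u1 ss) => [[r1' t1] b1]; case: (fwd w1 u1' ss') => [[r1'' t1'] b1'] /= [_ Ht1] [_ Ht1'].
  case: t1 Ht1 => [?|tau] Ht1; badv Ht1. case: t1' Ht1' => [?|tau'] Ht1'; badv Ht1'.
  move: Ht1 Ht1'; rewrite /sel_cont /= => -[Ht1] [Ht1'] [Hr1 Htt Hb1].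
  have F2 := sel_fwd w2 _ _ H2 Ht1. have F2' := sel_fwd w2 _ _ H2' Ht1'.
  have L2 := IH2 _ _ _ _ H2 Ht1 H2' Ht1' (conj Hu2 Htt).
  move: L2.
  case: (fwd w2 u2 tau) => [[r2' k2] b2]; case: (fwd w2 u2' tau') => [[r2'' k2'] b2'] /= [Hr2 Hk2 Hb2].
  split=> //=; first exact: le_cat.
  by rewrite !leI2.
- move=> k0 [?|?|??|?|???|a ?|???] [?|?|??|?|???|a' ?|???] [??|??|? k|??] [??|??|? k'|??] Hu Hs Hu' Hs';
    badv Hu; badv Hu'; badv Hs; badv Hs'.
  rewrite /le_out2 /le_out3 /le_val /le_elim /le_env /le_cont /= => -[[Ha _] [_ Hk]].
  by split.
- move=> fs x v k0 r0 s0 r1 k1 w' IH' wk IHk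
    [?|?|??|?|???|a fsel|???] [?|?|??|?|???|a' fsel'|???] [??|??|ys kk|??] [??|??|ys' kk'|??] Hu Hs Hu' Hs';
    badv Hu; badv Hu'; badv Hs; badv Hs'.
  move: Hu Hs Hu' Hs'; rewrite /sel_val /sel_elim /= => -[Hf] [Hys Hk0] [Hf'] [Hys' Hk0'].
  rewrite /le_out2 /le_val /le_elim /= => -[[Ha Hff] [_ Hkk]] /=.
  case/lastP: fsel Hf Hff => [|fsel [x1 vk]] Hf Hff.
    by move/(congr1 size): Hf; rewrite /map_fields size_map size_rcons.
  case/lastP: fsel' Hf' Hff => [|fsel' [x1' vk']] Hf' Hff.
    by move/(congr1 size): Hf'; rewrite /map_fields size_map size_rcons.
  move: Hf; rewrite /map_fields map_rcons => /rcons_inj [Hf _ Hvk].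
  move: Hf'; rewrite /map_fields map_rcons => /rcons_inj [Hf' _ Hvk'].
  case: (rf_rcons_inv _ _ _ _ _ _ _ Hff) => Hff2 _ Hvv.
  rewrite !rev_rcons !revK.
  have S1 : sel_val (VRec \top fsel) (VRec tt fs) by rewrite /sel_val /= /map_fields Hf.
  have S1' : sel_val (VRec \top fsel') (VRec tt fs) by rewrite /sel_val /= /map_fields Hf'.
  have E1 : sel_elim (ERec (map fst fs) kk) (ERec (map fst fs) k0) by rewrite /sel_elim /= Hk0.
  have E1' : sel_elim (ERec (map fst fs) kk') (ERec (map fst fs) k0) by rewrite /sel_elim /= Hk0'.
  have F1 := sel_fwd w' _ _ S1 E1. have F1' := sel_fwd w' _ _ S1' E1'.
  have L1 := IH' _ _ _ _ S1 E1 S1' E1'.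
  move: F1 F1' L1.
  case: (fwd w' _ _) => [[r1' t1] b1]; case: (fwd w' _ _) => [[r1'' t1'] b1'] /= [_ Ht1] [_ Ht1'] L1.
  have [Hr1 Htt Hb1] := L1 (conj (conj (lexx _) Hff2) (conj erefl Hkk)).
  clear L1; simpl in Hr1, Htt, Hb1.
  move: Htt.
  case: t1 Ht1 => [?|tau] Ht1; badv Ht1. case: t1' Ht1' => [?|tau'] Ht1'; badv Ht1'.
  move=> Htt; move: Ht1 Ht1' Htt; rewrite /sel_cont /= => -[Ht1] [Ht1'] Htt.
  have L2 := IHk _ _ _ _ Hvk Ht1 Hvk' Ht1' (conj Hvv Htt).
  move: L2.
  case: (fwd wk vk tau) => [[r2' k2] b2]; case: (fwd wk vk' tau') => [[r2'' k2'] b2'] /= [Hr2 Hk2 Hb2].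
  split=> //=; first exact: le_cat.
  by rewrite !leI2.
Qed.
End Main5.
From HB Require Import structures.
From mathcomp Require Import all_boot all_order ssralg ssrint.
Import Order.TTheory.
Local Open Scope order_scope.

Arguments mono_fwd {d A vb sb rb kb} w.
Arguments mono_bwd {d A vb sb rb kb} w.

Section Main6.
Context {d : Order.disp_t} {A : tbLatticeType d}.

Ltac badv H := try (move: H; rewrite /sel_val /sel_elim /sel_cont /sel_env /map_env /map_fields /=; discriminate).

Lemma le_out3_trans (x y z : env A * cont A * A) : le_out3 x y -> le_out3 y z -> le_out3 x z.
Proof.
case=> H1 H2 H3 [H1' H2' H3']; split.
- exact: le_env_trans H1 H1'.
- exact: le_cont_trans H2 H2'.
- exact: le_trans H3 H3'.
Qed.

Lemma fwd_bwd vb sb rb kb (w : mderiv vb sb rb kb) :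
  forall (r : env A) (k : cont A) (a : A), sel_env r rb -> sel_cont k kb ->
  le_out3 (r, k, a) (let '(v, s) := bwd w r k a in fwd w v s).
Proof.
elim: w => {vb sb rb kb}.
- move=> x v k0 [|[y v1] [|p r]] k a Hr Hk; badv Hr.
  move: Hr; rewrite /sel_env /map_env /map_fields /= => -[-> _].
  split; [rewrite /le_env /=; split=> //; split=> //; exact: le_val_refl | exact: le_cont_refl | exact: lex1].
- move=> k0 k1 [|??] k a Hr Hk; badv Hr. by split=> //; exact: le_cont_refl.
- move=> k0 k1 [|??] k a Hr Hk; badv Hr. by split=> //; exact: le_cont_refl.
- move=> k0 s [|??] k a Hr Hk; badv Hr. by split=> //; exact: le_cont_refl.
- move=> v1 v2 k0 s1 r1 t r2 k1 w1 IH1 w2 IH2 r k a Hr Hk /=.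
  move/sel_env_split: (Hr) => [Hr1 Hr2].
  have S2 := sel_bwd w2 _ _ a Hr2 Hk. have L2 := IH2 _ _ a Hr2 Hk.
  move: S2 L2; case: (bwd w2 _ _ _) => [u2 tau] /= [Su2 Stau] L2.
  have Sc : sel_cont (CElim tau) (CElim t) by rewrite /sel_cont /= Stau.
  have S1 := sel_bwd w1 _ _ a Hr1 Sc. have L1 := IH1 _ _ a Hr1 Sc.
  move: S1 L1; case: (bwd w1 _ _ _) => [u1 s1'] /= [Su1 Ss1] L1.
  have F1 := sel_fwd w1 _ _ Su1 Ss1.
  move: F1 L1; case: (fwd w1 u1 s1') => [[r1' t1] b1] /= [Sr1 St1] [Hle1 Ht Hb1].
  simpl in Hle1, Ht, Hb1; case: t1 St1 Ht => [?|tau'] St1 Ht; first by move: Ht.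
  move: St1 Ht; rewrite /sel_cont /le_cont /= => -[St1] Ht.
  have M2 := mono_fwd w2 u2 u2 tau tau' Su2 Stau Su2 St1 (conj (le_val_refl _) Ht).
  have L2' := le_out3_trans _ _ _ L2 M2.
  move: L2'; case: (fwd w2 u2 tau') => [[r2' k2] b2] /= [Hle2 Hk2 Hb2].
  split=> //=.
  - rewrite -(cat_take_drop (size r1) r); exact: le_cat.
  - by rewrite !lexI lexx Hb1 Hb2.
- move=> k0 r k a Hr Hk; badv Hr. case: r Hr => [|??] Hr; badv Hr. by split=> //; exact: le_cont_refl.
- move=> fs x v k0 r0 s' r1 k1 w' IH' wk IHk r k a Hr Hk /=.
  move/sel_env_split: (Hr) => [Hr1 Hr2].
  have S2 := sel_bwd wk _ _ a Hr2 Hk. have L2 := IHk _ _ a Hr2 Hk.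
  move: S2 L2; case: (bwd wk _ _ _) => [vk tau] /= [Svk Stau] L2.
  have Sc : sel_cont (CElim tau) (CElim s') by rewrite /sel_cont /= Stau.
  have S1 := sel_bwd w' _ _ a Hr1 Sc. have L1 := IH' _ _ a Hr1 Sc.
  move: S1 L1; case: (bwd w' _ _ _) => [vv ss] /= [Svv Sss].
  case: vv Svv => [?|?|??|?|???|b fsel|???] Svv; badv Svv.
  case: ss Sss => [??|??|ys k0'|??] Sss; badv Sss.
  move: Svv Sss; rewrite /sel_val /sel_elim /= => -[Hf] [Hys Hk0] L1.
  rewrite rev_rcons revK.
  have Sv1 : sel_val (VRec b fsel) (VRec tt fs) by rewrite /sel_val /= Hf.
  have Sv1' : sel_val (VRec \top fsel) (VRec tt fs) by rewrite /sel_val /= Hf.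
  have Se1 : sel_elim (ERec ys k0') (ERec (map fst fs) k0) by rewrite /sel_elim /= Hys Hk0.
  have M1 := mono_fwd w' _ _ _ _ Sv1 Se1 Sv1' Se1 (conj (conj (lex1 _) (le_env_refl _)) (le_elim_refl _)).
  rewrite Hys in M1 Se1 L1.
  have L1' := le_out3_trans _ _ _ L1 M1.
  have F1 := sel_fwd w' _ _ Sv1' Se1.
  move: F1 L1'; case: (fwd w' _ _) => [[r1' t1] b1] /= [Sr1 St1] [Hle1 Ht Hb1].
  simpl in Hle1, Ht, Hb1; case: t1 St1 Ht => [?|tau'] St1 Ht; first by move: Ht.
  move: St1 Ht; rewrite /sel_cont /le_cont /= => -[St1] Ht.
  have M2 := mono_fwd wk vk vk tau tau' Svk Stau Svk St1 (conj (le_val_refl _) Ht).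
  have L2' := le_out3_trans _ _ _ L2 M2.
  move: L2'; case: (fwd wk vk tau') => [[r2' k2] b2] /= [Hle2 Hk2 Hb2].
  split=> //=.
  - rewrite -(cat_take_drop (size r0) r); exact: le_cat.
  - by rewrite !lexI lexx Hb1 Hb2.
Qed.
End Main6.
From HB Require Import structures.
From mathcomp Require Import all_boot all_order ssralg ssrint.
Import Order.TTheory.
Local Open Scope order_scope.

Section Main7.
Context {d : Order.disp_t} {A : tbLatticeType d}.

Ltac badv H := try (move: H; rewrite /sel_val /sel_elim /sel_cont /sel_env /map_env /map_fields /=; discriminate).

Lemma le_out2_trans (x y z : value A * elim A) : le_out2 x y -> le_out2 y z -> le_out2 x z.
Proof.
case=> H1 H2 [H1' H2']; split.
- exact: le_val_trans H1 H1'.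
- exact: le_elim_trans H2 H2'.
Qed.

Lemma meet3 (a b c : A) : [/\ a `&` b `&` c <= a, a `&` b `&` c <= b & a `&` b `&` c <= c].
Proof.
split; [exact: le_trans (leIl _ _) (leIl _ _) | exact: le_trans (leIl _ _) (leIr _ _) | exact: leIr].
Qed.

Lemma bwd_fwd vb sb rb kb (w : mderiv vb sb rb kb) :
  forall (v : value A) (s : elim A), sel_val v vb -> sel_elim s sb ->
  le_out2 (let '(r, k, a) := fwd w v s in bwd w r k a) (v, s).
Proof.
elim: w => {vb sb rb kb}.
- move=> x v k0 u [y k|??|??|??] Hu Hs; badv Hs.
  move: Hs; rewrite /sel_elim /= => -[-> _].
  split; [exact: le_val_refl | split=> //; exact: le_cont_refl].
- move=> k0 k1 [a|?|??|?|???|??|???] [??|k kk|??|??] Hu Hs; badv Hu; badv Hs.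
  move: Hs; rewrite /sel_elim /= => -[_ Hkk].
  split; first exact: lexx. split; [exact: le_cont_refl | exact: le_bot_cont].
- move=> k0 k1 [?|a|??|?|???|??|???] [??|k kk|??|??] Hu Hs; badv Hu; badv Hs.
  move: Hs; rewrite /sel_elim /= => -[Hkk _].
  split; first exact: lexx. split; [exact: le_bot_cont | exact: le_cont_refl].
- move=> k0 s0 [?|?|??|a|???|??|???] [??|??|??|k ss] Hu Hs; badv Hu; badv Hs.
  move: Hs; rewrite /sel_elim /= => -[_ Hss].
  split; first exact: lexx. split; [exact: le_cont_refl | exact: le_bot_elim].
- move=> v1 v2 k0 s1 r1 t r2 k1 w1 IH1 w2 IH2
    [?|?|??|?|a u1 u2|??|???] [??|??|??|kk ss] Hu Hs; badv Hu; badv Hs.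
  move: (Hu) (Hs); rewrite /sel_val /sel_elim /= => -[H1 H2] [Hkk H3] /=.
  have F1 := sel_fwd w1 _ _ H1 H3. have L1 := IH1 _ _ H1 H3.
  move: F1 L1; case: (fwd w1 u1 ss) => [[r1' t1] b] /= [Sr1 St1].
  case: t1 St1 => [?|tau] St1; badv St1.
  move: St1; rewrite /sel_cont /= => -[St1] L1.
  have F2 := sel_fwd w2 _ _ H2 St1. have L2 := IH2 _ _ H2 St1.
  move: F2 L2; case: (fwd w2 u2 tau) => [[r2' k2] b'] /= [Sr2 Sk2] L2.
  rewrite -(sel_env_size _ _ Sr1) take_size_cat // drop_size_cat //.
  have [Ha Hb Hb'] := meet3 a b b'.
  have M2 := mono_bwd w2 _ _ _ _ (a `&` b `&` b') b' Sr2 Sk2 Sr2 Sk2 (And3 (le_env_refl _) (le_cont_refl _) Hb').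
  have L2' := le_out2_trans _ _ _ M2 L2.
  have S2 := sel_bwd w2 _ _ (a `&` b `&` b') Sr2 Sk2.
  move: S2 L2'; case: (bwd w2 r2' k2 _) => [u2' tau'] /= [Su2 Stau'] [Hu2 Htau].
  have Sc' : sel_cont (CElim tau') (CElim t) by rewrite /sel_cont /= Stau'.
  have Sc : sel_cont (CElim tau) (CElim t) by rewrite /sel_cont /= St1.
  have M1 := mono_bwd w1 _ _ _ _ (a `&` b `&` b') b Sr1 Sc' Sr1 Sc (And3 (le_env_refl _) Htau Hb).
  have L1' := le_out2_trans _ _ _ M1 L1.
  move: L1'; case: (bwd w1 r1' _ _) => [u1' s1'] /= [Hu1 Hs1].
  split; first by split.
  split=> //; exact: le_bot_cont.
- move=> k0 [?|?|??|?|???|a fs|???] [??|??|ys k|??] Hu Hs; badv Hu; badv Hs.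
  move: Hu Hs; rewrite /sel_val /sel_elim /= => -[Hfs] [Hys _].
  case: fs Hfs => // _; rewrite Hys.
  split; first by split=> //; exact: lexx.
  split=> //; exact: le_cont_refl.
- move=> fs x v k0 r0 s' r1 k1 w' IH' wk IHk
    [?|?|??|?|???|a fsel|???] [??|??|ys kk|??] Hu Hs; badv Hu; badv Hs.
  move: Hu Hs; rewrite /sel_val /sel_elim /= => -[Hf] [Hys Hkk] /=.
  case/lastP: fsel Hf => [|fsel [x1 vk]] Hf.
    by move/(congr1 size): Hf; rewrite /map_fields size_map size_rcons.
  move: Hf; rewrite /map_fields map_rcons => /rcons_inj [Hf Hx1 Hvk].
  rewrite rev_rcons revK /=.
  have Sv1 : sel_val (VRec \top fsel) (VRec tt fs) by rewrite /sel_val /= /map_fields Hf.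
  have Se1 : sel_elim (ERec (map fst fs) kk) (ERec (map fst fs) k0) by rewrite /sel_elim /= Hkk.
  have F1 := sel_fwd w' _ _ Sv1 Se1. have L1 := IH' _ _ Sv1 Se1.
  move: F1 L1; case: (fwd w' _ _) => [[r1' t1] b] /= [Sr1 St1].
  case: t1 St1 => [?|tau] St1; badv St1.
  move: St1; rewrite /sel_cont /= => -[St1] L1.
  have F2 := sel_fwd wk _ _ Hvk St1. have L2 := IHk _ _ Hvk St1.
  move: F2 L2; case: (fwd wk vk tau) => [[r2' k2] b'] /= [Sr2 Sk2] L2.
  rewrite -(sel_env_size _ _ Sr1) take_size_cat // drop_size_cat //.
  have [Ha Hb Hb'] := meet3 a b b'.
  have M2 := mono_bwd wk _ _ _ _ (a `&` b `&` b') b' Sr2 Sk2 Sr2 Sk2 (And3 (le_env_refl _) (le_cont_refl _) Hb').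
  have L2' := le_out2_trans _ _ _ M2 L2.
  have S2 := sel_bwd wk _ _ (a `&` b `&` b') Sr2 Sk2.
  move: S2 L2'; case: (bwd wk r2' k2 _) => [vk' tau'] /= [Svk Stau'] [Hvk' Htau].
  have Sc' : sel_cont (CElim tau') (CElim s') by rewrite /sel_cont /= Stau'.
  have Sc : sel_cont (CElim tau) (CElim s') by rewrite /sel_cont /= St1.
  have M1 := mono_bwd w' _ _ _ _ (a `&` b `&` b') b Sr1 Sc' Sr1 Sc (And3 (le_env_refl _) Htau Hb).
  have L1' := le_out2_trans _ _ _ M1 L1.
  have S1 := sel_bwd w' _ _ (a `&` b `&` b') Sr1 Sc'.
  move: S1 L1'; case: (bwd w' r1' _ _) => [vv ss] /= [Svv Sss].
  case: vv Svv => [?|?|??|?|???|c fsel'|???] Svv; badv Svv.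
  case: ss Sss => [??|??|ys' k0'|??] Sss; badv Sss.
  rewrite /le_out2 /le_val /le_elim /= => -[[_ Hfs] [_ Hk0]].
  rewrite Hys Hx1.
  split; first by split=> //; apply: rf_rcons.
  by split.
Qed.
End Main7.
Theorem mainTheorem3 (d : Order.disp_t) (A : tbLatticeType d)
    (vb : value unit) (sb : elim unit) (rb : env unit) (kb : cont unit)
    (w : mderiv vb sb rb kb) :
  (* bwd_w : Sel(rho) x Sel(kappa) x A -> Sel(v) x Sel(sigma) *)
    (forall (r : env A) (k : cont A) (a : A),
        sel_env r rb -> sel_cont k kb ->
        sel_val (bwd w r k a).1 vb /\ sel_elim (bwd w r k a).2 sb) /\
    (* fwd_w : Sel(v) x Sel(sigma) -> Sel(rho) x Sel(kappa) x A *)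
    (forall (v : value A) (s : elim A),
        sel_val v vb -> sel_elim s sb ->
        sel_env (fwd w v s).1.1 rb /\ sel_cont (fwd w v s).1.2 kb) /\
    (* bwd_w monotone *)
    (forall (r r' : env A) (k k' : cont A) (a a' : A),
        sel_env r rb -> sel_cont k kb -> sel_env r' rb -> sel_cont k' kb ->
        le_out3 (r, k, a) (r', k', a') -> le_out2 (bwd w r k a) (bwd w r' k' a')) /\
    (* fwd_w monotone *)
    (forall (v v' : value A) (s s' : elim A),
        sel_val v vb -> sel_elim s sb -> sel_val v' vb -> sel_elim s' sb ->
        le_out2 (v, s) (v', s') -> le_out3 (fwd w v s) (fwd w v' s')) /\
    (* fwd_w (bwd_w (rho, kappa, alpha)) >= (rho, kappa, alpha) *)
    (forall (r : env A) (k : cont A) (a : A),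
        sel_env r rb -> sel_cont k kb ->
        le_out3 (r, k, a) (let '(v, s) := bwd w r k a in fwd w v s)) /\
    (* bwd_w (fwd_w (v, sigma)) <= (v, sigma) *)
    (forall (v : value A) (s : elim A),
        sel_val v vb -> sel_elim s sb ->
        le_out2 (let '(r, k, a) := fwd w v s in bwd w r k a) (v, s)).
Proof.
Proof.
split; first exact: sel_bwd.
split; first exact: sel_fwd.
split; first exact: mono_bwd.
split; first exact: mono_fwd.
split; first exact: fwd_bwd.
exact: bwd_fwd.
Qed.
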